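(* Let $X$ be a finite set, $r\ge 3$, and $\tau$ a non-empty subset of $\binom{X}{r}$. If $\tau$ is slim then $\tau$ is thin. Moreover, for $r=3$, $\tau$ is thin if and only if $\tau$ is slim.
   Context: $L(\tau)=\bigcup_{s\in\tau}s$. For $\tau\subseteq\binom{X}{r}$ non-empty, ${\rm exc}(\tau)=|L(\tau)|-|\tau|-(r-1)$ and $\tau$ is thin if ${\rm exc}(\tau')\ge0$ for all non-empty $\tau'\subseteq\tau$. For a non-empty collection $\tau$ of subsets of $X$ each of size at least 3, ${\rm exc}'(\tau)=|L(\tau)|-2-\sum_{s\in\tau}(|s|-2)$, and $\tau$ is slim if ${\rm exc}'(\tau')\ge0$ for all non-empty $\tau'\subseteq\tau$. *)

(* Defs.v *)
From mathcomp Require Import all_boot all_order all_algebra.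
Set Implicit Arguments. Unset Strict Implicit. Unset Printing Implicit Defensive.
Import GRing.Theory Num.Theory.
Local Open Scope ring_scope.

Definition L (X : finType) (tau : {set {set X}}) : {set X} :=
  \bigcup_(s in tau) s.

(* tau is a subset of binom(X, r): every member has exactly r elements *)
Definition r_uniform (X : finType) (r : nat) (tau : {set {set X}}) : Prop :=
  forall s, s \in tau -> #|s| = r.

Definition exc (X : finType) (r : nat) (tau : {set {set X}}) : int :=
  (#|L tau|%:Z - #|tau|%:Z - (r%:Z - 1)).

Definition thin (X : finType) (r : nat) (tau : {set {set X}}) : Prop :=
  forall tau' : {set {set X}}, tau' \subset tau -> tau' != set0 ->
    0 <= exc r tau'.

Definition exc' (X : finType) (tau : {set {set X}}) : int :=
  #|L tau|%:Z - 2 - \sum_(s in tau) (#|s|%:Z - 2).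

Definition slim (X : finType) (tau : {set {set X}}) : Prop :=
  (forall s, s \in tau -> 3 <= #|s|)%N /\
  forall tau' : {set {set X}}, tau' \subset tau -> tau' != set0 ->
    0 <= exc' tau'.

(* Main.v *)
Require Import Defs.
From mathcomp Require Import all_boot all_order all_algebra.
From mathcomp Require Import zify.
Import GRing.Theory Num.Theory.

Lemma sum_eq {X : finType} {r : nat} {tau tau' : {set {set X}}} :
  r_uniform r tau -> tau' \subset tau ->
  (\sum_(s in tau') (#|s|%:Z - 2) = (#|tau'|%:Z * (r%:Z - 2)))%R.
Proof.
move=> hu hsub.
rewrite (eq_bigr (fun _ => (r%:Z - 2)%R)); last first.
  by move=> s hs; rewrite hu // (subsetP hsub).
rewrite sumr_const -mulr_natl; lia.
Qed.

Theorem lemma4 (X : finType) (r : nat) (tau : {set {set X}}) :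
  (3 <= r)%N -> tau != set0 -> r_uniform r tau ->
  (slim tau -> thin r tau) /\ (r = 3%N -> (thin r tau <-> slim tau)).
Proof.
move=> hr _ hu; split.
  case=> _ hs t' hsub hne.
  have := hs t' hsub hne; rewrite /exc' /exc (sum_eq hu hsub).
  have : (0 < #|t'|)%N by rewrite card_gt0.
  move: #|t'| #|L t'| => k l hk.
  nia.
move=> r3; split.
  move=> ht; split.
    by move=> s /hu ->; rewrite r3.
  move=> t' hsub hne.
  have := ht t' hsub hne; rewrite /exc' /exc (sum_eq hu hsub) r3.
  move: #|t'| #|L t'| => k l.
  lia.
case=> _ hs t' hsub hne.
have := hs t' hsub hne; rewrite /exc' /exc (sum_eq hu hsub) r3.
move: #|t'| #|L t'| => k l.
lia.
Qed.
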